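(* Let $\vec f=(f_1,\dots,f_n)$ be a profile of acknowledgement-based protocols. The following are equivalent: (i) $\vec f$ is an equilibrium; (ii) for every player $i\in[n]$ and every protocol $g_i\in\mathcal G_i^{\vec f}$, $C_i^{(\vec f_{-i},g_i)}(h_0)=\min_{f_i'}C_i^{(\vec f_{-i},f_i')}(h_0)=C_i^{\vec f}(h_0)$, where the minimum is over all protocols $f_i'$ of player $i$.
   Context: Contention game: $n$ players, channels $K=\{1,\dots,k\}$, slots $t=1,2,\dots$; each player has one packet, initially pending; in each slot a pending player chooses (possibly randomly) an action in $A=\{0,1,\dots,k\}$ ($0$ = idle, $a$ = transmit on channel $a$); a lone transmitter on a channel succeeds and leaves, colliding transmitters remain pending. $X_{i,t}$ is player $i$'s action at slot $t$, $h_{i,t}=(X_{i,1},\dots,X_{i,t})$ her personal history. Acknowledgement-based protocols: decision rules (distributions on $A$ at each slot) depend only on $h_{i,t-1}$; only transmitting players learn whether they succeeded. $T_i$ is player $i$'s latency; $C_i^{\vec f}(h_0)=\mathbb E[T_i\mid\vec f]$ is her unconditional expected latency under profile $\vec f$, and $(\vec f_{-i},g_i)$ denotes the profile with $f_i$ replaced by $g_i$. $\vec f$ is an equilibrium if for every $i$, slot $t$ and history, player $i$ cannot decrease her conditional expected latency by unilaterally deviating after $t$. For $\tau^*\ge1$ and a history $h_{i,\tau^*}=(a_{i,1},\dots,a_{i,\tau^*})$, $g_i(h_{i,\tau^*})$ is the protocol that plays $a_{i,t}$ with probability $1$ at each slot $1\le t\le\tau^*$ and follows $f_{i,t}$ for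 $t>\tau^*$. A history $h_{i,\tau^*}$ is consistent with $\vec f$ if it occurs with positive probability for player $i$ under $\vec f$; $\mathcal G_i^{\vec f}$ is the set of all protocols $g_i(h_{i,\tau^*})$, over all $\tau^*\ge1$, with $h_{i,\tau^*}$ consistent with $\vec f$. *)

(* Defs.v *)
From HB Require Import structures.
From mathcomp Require Import all_boot all_order all_algebra.
From mathcomp Require Import all_classical all_reals all_analysis.
Set Implicit Arguments. Unset Strict Implicit. Unset Printing Implicit Defensive.
Import Order.TTheory GRing.Theory Num.Theory.
Local Open Scope ring_scope.

(* Contention game with n players and k channels; actions A = {0,...,k}
   are encoded as 'I_k.+1 (0 = idle, a = transmit on channel a). *)
Section Contention.
Variables (R : realType) (n k : nat).

Definition action := 'I_k.+1.
Definition idle : action := ord0.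

(* A (acknowledgement-based) protocol: the decision rule at slot t (t >= 1)
   given the personal history h_{i,t-1} (a sequence of t-1 actions) is a
   distribution on A. *)
Definition protocol := nat -> seq action -> {ffun action -> R}.

Definition is_dist (d : {ffun action -> R}) :=
  (forall a, 0 <= d a) /\ \sum_a d a = 1.

Definition valid_protocol (g : protocol) := forall t h, is_dist (g t h).

Definition profile := 'I_n -> protocol.

Definition valid_profile (f : profile) := forall i, valid_protocol (f i).

Definition upd (f : profile) (i : 'I_n) (g : protocol) : profile :=
  fun j => if j == i then g else f j.

(* joint action profile in one slot; players that have left play idle *)
Definition slot_prof := {ffun 'I_n -> action}.
Definition prof0 : slot_prof := [ffun => idle].

Definition succ (x : slot_prof) (i : 'I_n) : bool :=
  (x i != idle) && [forall j, (j != i) ==> (x j != x i)].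

Definition pendingb (tr : seq slot_prof) (i : 'I_n) : bool :=
  all (fun x => ~~ succ x i) tr.

Definition phist (tr : seq slot_prof) (i : 'I_n) : seq action :=
  map (fun x : slot_prof => x i) tr.

(* probability weight of a trajectory (slots 1..size tr) under profile f:
   pending players sample independently from their decision rules, players
   who have left idle deterministically *)
Definition weight (f : profile) (tr : seq slot_prof) : R :=
  \prod_(s < size tr) \prod_(j : 'I_n)
    (if pendingb (take s tr) j
     then f j s.+1 (phist (take s tr) j) (nth prof0 tr s j)
     else ((nth prof0 tr s j == idle)%:R)).

Definition probm (f : profile) (m : nat) (E : seq slot_prof -> bool) : R :=
  \sum_(tr : m.-tuple slot_prof | E tr) weight f tr.

(* event "player i is pending at the start of slot t = size h and her
   actions in slots 1..t are h" (for h = [::] it is the sure event) *)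
Definition Hev (i : 'I_n) (h : seq action) (tr : seq slot_prof) : bool :=
  pendingb (take (size h).-1 tr) i && (phist (take (size h) tr) i == h).

Local Open Scope ereal_scope.

(* C_i^f(h_0) = E[T_i] = sum_{s >= 0} P(T_i > s), in [0, +oo] *)
Definition cost (f : profile) (i : 'I_n) : \bar R :=
  \sum_(s <oo) (probm f s (fun tr => pendingb tr i))%:E.

(* conditional expected latency of player i given history h of length t:
   E[T_i 1_H] / P(H) *)
Definition condcost (f : profile) (i : 'I_n) (h : seq action) : \bar R :=
  (\sum_(s <oo)
     (probm f (maxn s (size h))
        (fun tr => pendingb (take s tr) i && Hev i h (take (size h) tr)))%:E)
  * ((probm f (size h) (Hev i h))^-1)%:E.

Local Close Scope ereal_scope.

Definition equilibrium (f : profile) : Prop :=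
  forall (i : 'I_n) (t : nat) (h : seq action), size h = t ->
    0 < probm f t (Hev i h) ->
    forall g : protocol, valid_protocol g ->
      (forall s, (s <= t)%N -> g s = f i s) ->
      (condcost f i h <= condcost (upd f i g) i h)%E.

Definition point (a : action) : {ffun action -> R} := [ffun b => (b == a)%:R].

Definition gdev (f : profile) (i : 'I_n) (h : seq action) : protocol :=
  fun t hist => if (1 <= t <= size h)%N then point (nth idle h t.-1)
                else f i t hist.

Definition consistent (f : profile) (i : 'I_n) (h : seq action) : Prop :=
  (1 <= size h)%N /\ 0 < probm f (size h) (Hev i h).

Definition in_G (f : profile) (i : 'I_n) (g : protocol) : Prop :=
  exists h, consistent f i h /\ g = gdev f i h.

Definition mincost (f : profile) (i : 'I_n) : \bar R :=
  ereal_inf [set cost (upd f i g) i | g in [set g | valid_protocol g]].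

End Contention.

(* Main.v *)
Require Import Defs.
From HB Require Import structures.
From mathcomp Require Import all_boot all_order all_algebra.
From mathcomp Require Import all_classical all_reals all_analysis.
From mathcomp Require Import lra.
Set Implicit Arguments. Unset Strict Implicit. Unset Printing Implicit Defensive.
Import Order.TTheory GRing.Theory Num.Theory.
Local Open Scope ring_scope.

Section Dev.
Variables (R : realType) (n k : nat).
Local Notation profile := (profile R n k).
Local Notation protocol := (protocol R k).
Local Notation slot := (slot_prof n k).
Local Notation p0 := (prof0 n k).

Definition fac (F : profile) (tr : seq slot) (s : nat) (j : 'I_n) : R :=
  if pendingb (take s tr) j
  then F j s.+1 (phist (take s tr) j) (nth p0 tr s j)
  else ((nth p0 tr s j == idle k)%:R).

Lemma weightE (F : profile) (tr : seq slot) : weight F tr = \prod_(s < size tr) \prod_j fac F tr s j.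
Proof. by []. Qed.

Lemma weight_neq0 (F : profile) (tr : seq slot) s j : weight F tr != 0 -> (s < size tr)%N -> fac F tr s j != 0.
Proof.
rewrite weightE => /prodf_neq0 H hs.
by have := H (Ordinal hs) isT => /prodf_neq0; apply.
Qed.

Lemma fac_ge0 (F : profile) (tr : seq slot) s j : valid_profile F -> 0 <= fac F tr s j.
Proof. move=> hF; rewrite /fac; case: ifP => _ //; exact: (hF _ _ _).1. Qed.

Lemma weight_ge0 (F : profile) (tr : seq slot) : valid_profile F -> 0 <= weight F tr.
Proof. by move=> hF; rewrite weightE; apply: prodr_ge0 => s _; apply: prodr_ge0 => j _; apply: fac_ge0. Qed.

Lemma probm_ge0 (F : profile) m (E : seq slot -> bool) : valid_profile F -> 0 <= probm F m E.
Proof. by move=> hF; apply: sumr_ge0 => tr _; apply: weight_ge0. Qed.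

Lemma weight_agree (F F' : profile) (tr : seq slot) :
  (forall j s, (0 < s <= size tr)%N -> F j s = F' j s) -> weight F tr = weight F' tr.
Proof.
move=> H; rewrite !weightE; apply: eq_bigr => s _; apply: eq_bigr => j _.
by rewrite /fac (H j s.+1) // ltn_ord.
Qed.

Lemma probm_agree (F F' : profile) m (E : seq slot -> bool) :
  (forall j s, (0 < s <= m)%N -> F j s = F' j s) -> probm F m E = probm F' m E.
Proof.
move=> H; apply: eq_bigr => tr _; apply: weight_agree => j s hs.
by apply: H; rewrite size_tuple in hs.
Qed.

Lemma probm_ext_w (F : profile) m (E1 E2 : seq slot -> bool) :
  (forall tr : m.-tuple slot, weight F tr != 0 -> E1 tr = E2 tr) -> probm F m E1 = probm F m E2.
Proof.
move=> H; rewrite /probm [LHS]big_mkcond [RHS]big_mkcond; apply: eq_bigr => tr _.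
have [w0|wn0] := eqVneq (weight F tr) 0; first by rewrite w0; case: ifP; case: ifP.
by rewrite H.
Qed.

Lemma probm_scale (F G : profile) c m (E : seq slot -> bool) :
  (forall tr : m.-tuple slot, E tr -> weight F tr = c * weight G tr) ->
  probm F m E = c * probm G m E.
Proof. by move=> H; rewrite /probm mulr_sumr; apply: eq_bigr => tr /H. Qed.

Lemma probm_gt0 (F : profile) m (E : seq slot -> bool) (tr : seq slot) :
  valid_profile F -> size tr = m -> E tr -> 0 < weight F tr -> 0 < probm F m E.
Proof.
move=> hF hs hE hw.
have hs' : size tr == m by apply/eqP.
pose t := Tuple hs'.
rewrite /probm (bigD1 t) //=; apply: (lt_le_trans hw); rewrite lerDl.
by apply: sumr_ge0 => ? _; apply: weight_ge0.
Qed.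

Lemma probm_gt0_ex (F : profile) m (E : seq slot -> bool) : 0 < probm F m E ->
  exists tr : m.-tuple slot, E tr /\ weight F tr != 0.
Proof.
move=> hp; case: (pickP (fun tr : m.-tuple slot => E tr && (weight F tr != 0))).
  by move=> tr /andP[? ?]; exists tr.
move=> H; suff: probm F m E = 0 by move=> e; rewrite e ltxx in hp.
by apply: big1 => tr hE; have := H tr; rewrite hE /= => /negbFE/eqP.
Qed.


Local Notation act := (action k).
Local Notation idl := (idle k).

Definition force (h : seq act) (g : protocol) : protocol :=
  fun t hist => if (1 <= t <= size h)%N then Defs.point R (nth idl h t.-1) else g t hist.

Lemma gdevE (f : profile) i h : gdev f i h = force h (f i).
Proof. by []. Qed.

Lemma point_dist (a : act) : is_dist (Defs.point R a).
Proof.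
split=> [b|]; first by rewrite ffunE ler0n.
rewrite (bigD1 a) //= ffunE eqxx big1 ?addr0 // => b /negbTE hb.
by rewrite ffunE hb.
Qed.

Lemma force_valid h (g : protocol) : valid_protocol g -> valid_protocol (force h g).
Proof. by move=> hg t hist; rewrite /force; case: ifP => _ //; apply: point_dist. Qed.

Lemma upd_valid (f : profile) i (g : protocol) :
  valid_profile f -> valid_protocol g -> valid_profile (upd f i g).
Proof. by move=> hf hg j; rewrite /upd; case: ifP. Qed.

Lemma pend_take (tr : seq slot) m j : pendingb tr j -> pendingb (take m tr) j.
Proof. by rewrite -{1}(cat_take_drop m tr) /pendingb all_cat => /andP[]. Qed.

Lemma pend_take_le (tr : seq slot) m m' j :
  (m <= m')%N -> pendingb (take m' tr) j -> pendingb (take m tr) j.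
Proof. by move=> hm /(pend_take m); rewrite take_takel. Qed.

Lemma forced_act (f : profile) i h g (tr : seq slot) r :
  weight (upd f i (force h g)) tr != 0 -> (r < size tr)%N -> (r < size h)%N ->
  pendingb (take r tr) i -> nth p0 tr r i = nth idl h r.
Proof.
move=> hw hr hrh hp; have := weight_neq0 i hw hr.
rewrite /fac hp /upd eqxx /force /= hrh ffunE.
by case: (nth p0 tr r i =P nth idl h r) => // _; rewrite eqxx.
Qed.

Lemma Hev_forced (f : profile) i h g (tr : seq slot) :
  (size h <= size tr)%N -> weight (upd f i (force h g)) tr != 0 -> pendingb tr i ->
  Hev i h (take (size h) tr).
Proof.
move=> hle hw hp; rewrite /Hev !take_takel ?leq_pred // pend_take //=.
apply/eqP; apply: (@eq_from_nth _ idl); first by rewrite size_map size_takel.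
rewrite size_map size_takel // => r hr.
rewrite (nth_map p0) ?size_takel // nth_take //.
apply: (forced_act hw (leq_trans hr hle) hr).
exact: pend_take.
Qed.

Definition pi (g : protocol) (h : seq act) : R :=
  \prod_(r < size h) g r.+1 (take r h) (nth idl h r).

Lemma weight_pi (f : profile) i g h (tr : seq slot) :
  (size h <= size tr)%N -> Hev i h (take (size h) tr) ->
  weight (upd f i g) tr = pi g h * weight (upd f i (force h g)) tr.
Proof.
move=> hle /andP[hp /eqP hh]; rewrite take_takel ?leq_pred // in hp.
rewrite take_takel // in hh.
have key : forall s : 'I_(size tr), \prod_j fac (upd f i g) tr s j =
   (if (s < size h)%N then g s.+1 (take s h) (nth idl h s) else 1) *
   \prod_j fac (upd f i (force h g)) tr s j.
  move=> s; rewrite (bigD1 i) //= [in RHS](bigD1 i) //= mulrA; congr (_ * _); last first.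
    by apply: eq_bigr => j /negbTE hj; rewrite /fac /upd hj.
  rewrite /fac /upd eqxx /force.
  case: (ltnP s (size h)) => hs /=.
    have -> : pendingb (take s tr) i.
      by apply: pend_take_le hp; rewrite -ltnS prednK // (leq_ltn_trans _ hs).
    have e1 : phist (take s tr) i = take s h.
      by rewrite -hh /phist -map_take take_takel // ltnW.
    have e2 : nth p0 tr s i = nth idl h s.
      by rewrite -[in RHS]hh (nth_map p0) ?size_takel // nth_take.
    by rewrite e1 e2 ffunE eqxx mulr1.
  by rewrite mul1r.
rewrite !weightE (eq_bigr _ (fun s _ => key s)) big_split /=; congr (_ * _).
rewrite /pi (big_ord_widen _ (fun r => g r.+1 (take r h) (nth idl h r)) hle) [RHS]big_mkcond; by [].
Qed.


Lemma condcost_pi (f : profile) i (g : protocol) h :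
  valid_profile f -> valid_protocol g -> pi g h != 0 ->
  condcost (upd f i g) i h = condcost (upd f i (force h g)) i h.
Proof.
move=> hf hg hpi; rewrite /condcost.
set G := upd f i (force h g).
have num : forall s, probm (upd f i g) (maxn s (size h))
     (fun tr => pendingb (take s tr) i && Hev i h (take (size h) tr)) =
   pi g h * probm G (maxn s (size h))
     (fun tr => pendingb (take s tr) i && Hev i h (take (size h) tr)).
  move=> s; apply: probm_scale => tr /andP[_ hev]; apply: weight_pi => //.
  by rewrite size_tuple leq_maxr.
have den : probm (upd f i g) (size h) (Hev i h) = pi g h * probm G (size h) (Hev i h).
  apply: probm_scale => tr hev; apply: weight_pi; first by rewrite size_tuple.
  by rewrite take_oversize // size_tuple.
under eq_eseriesr do rewrite num EFinM.
rewrite nneseriesZl; last first.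
  move=> s _; rewrite lee_fin; apply: probm_ge0; apply: upd_valid => //.
  exact: force_valid.
rewrite den invfM EFinM muleCA !muleA -EFinM mulVf // mul1e; by [].
Qed.


Lemma split_tail (u v : nat -> R) t : (forall s, 0 <= u s) ->
  (forall s, (t <= s)%N -> u s = v s) ->
  (\sum_(s <oo) (u s)%:E = (\sum_(0 <= s < t) u s)%:E + \sum_(t <= s <oo) (v s)%:E)%E.
Proof.
move=> hu huv.
rewrite (nneseries_split 0 t); last by move=> s _; rewrite lee_fin.
rewrite add0n sumEFin; congr (_ + _)%E.
rewrite eseries_cond [RHS]eseries_cond; apply: eq_eseriesr => s /andP[_ hs].
by rewrite huv.
Qed.

Lemma cost_condcost_le (f : profile) i h (g1 g2 : protocol) :
  valid_profile f -> valid_protocol g1 -> valid_protocol g2 ->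
  (forall s, (s <= size h)%N -> g1 s = g2 s) ->
  0 < probm (upd f i (force h g1)) (size h) (Hev i h) ->
  (cost (upd f i (force h g1)) i <= cost (upd f i (force h g2)) i)%E =
  (condcost (upd f i (force h g1)) i h <= condcost (upd f i (force h g2)) i h)%E.
Proof.
move=> hf hg1 hg2 hg hP.
set t := size h.
set G1 := upd f i (force h g1); set G2 := upd f i (force h g2).
have hv1 : valid_profile G1 by apply: upd_valid => //; apply: force_valid.
have hv2 : valid_profile G2 by apply: upd_valid => //; apply: force_valid.
have agree : forall m, (m <= t)%N -> forall j s, (0 < s <= m)%N -> G1 j s = G2 j s.
  move=> m hm j s /andP[hs0 hsm]; rewrite /G1 /G2 /upd; case: ifP => // _.
  by rewrite /force /= hg //; exact: leq_trans hsm hm.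
pose a (G : profile) s := probm G s (fun tr => pendingb tr i).
pose b (G : profile) s := probm G (maxn s t)
   (fun tr => pendingb (take s tr) i && Hev i h (take t tr)).
have hAB : forall g, forall s, (t <= s)%N -> a (upd f i (force h g)) s = b (upd f i (force h g)) s.
  move=> g s hs; rewrite /a /b (maxn_idPl hs); apply: probm_ext_w => tr hw.
  rewrite take_oversize ?size_tuple //.
  case hp: (pendingb tr i) => //=; symmetry.
  by apply: Hev_forced hw hp; rewrite size_tuple.
have hA : forall s, (s < t)%N -> a G1 s = a G2 s.
  by move=> s hs; apply: probm_agree; apply: agree; apply: ltnW.
have hB : forall s, (s < t)%N -> b G1 s = b G2 s.
  by move=> s hs; rewrite /b (maxn_idPr (ltnW hs)); apply: probm_agree; apply: agree.
have hPe : probm G1 t (Hev i h) = probm G2 t (Hev i h).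
  by apply: probm_agree; apply: agree.
have ca : forall G, valid_profile G -> (forall s, (t <= s)%N -> a G s = b G s) ->
   (cost G i = (\sum_(0 <= s < t) a G s)%:E + \sum_(t <= s <oo) (b G s)%:E)%E.
  by move=> G hG hab; rewrite /cost (split_tail (u := a G) (v := b G) (t := t)) // => s; apply: probm_ge0.
have cb : forall G, valid_profile G ->
   (condcost G i h = ((\sum_(0 <= s < t) b G s)%:E + \sum_(t <= s <oo) (b G s)%:E)
                     * ((probm G t (Hev i h))^-1)%:E)%E.
  by move=> G hG; rewrite /condcost (split_tail (u := b G) (v := b G) (t := t)) // => s; apply: probm_ge0.
rewrite (ca G1 hv1 (hAB g1)) (ca G2 hv2 (hAB g2)) (cb G1 hv1) (cb G2 hv2) -hPe.
have -> : \sum_(0 <= s < t) a G2 s = \sum_(0 <= s < t) a G1 s.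
  by rewrite big_nat_cond [RHS]big_nat_cond; apply: eq_bigr => s /andP[/andP[_ hs] _]; rewrite hA.
have -> : \sum_(0 <= s < t) b G2 s = \sum_(0 <= s < t) b G1 s.
  by rewrite big_nat_cond [RHS]big_nat_cond; apply: eq_bigr => s /andP[/andP[_ hs] _]; rewrite hB.
rewrite lee_pmul2r //; last by rewrite lte_fin invr_gt0.
by rewrite !leeD2lE.
Qed.


Lemma forced_fac (f : profile) i h g (tr : seq slot) r :
  fac (upd f i (force h g)) tr r i != 0 -> (r < size h)%N ->
  pendingb (take r tr) i -> nth p0 tr r i = nth idl h r.
Proof.
move=> hw hrh hp; move: hw.
rewrite /fac hp /upd eqxx /force /= hrh ffunE.
by case: (nth p0 tr r i =P nth idl h r) => // _; rewrite eqxx.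
Qed.

Lemma fac_agree (F F' : profile) (tr : seq slot) s j :
  F j s.+1 = F' j s.+1 -> fac F tr s j = fac F' tr s j.
Proof. by rewrite /fac => ->. Qed.

Section Mix.
Variables (f : profile) (i : 'I_n) (hf : valid_profile f) (hm : seq act).
Let m := size hm.
Let p := f i m.+1 hm.
Definition gb (b : act) : protocol := fun s hist => if s == m.+1 then Defs.point R b else f i s hist.
Let Gm := upd f i (force hm (f i)).
Let Gb b := upd f i (force hm (gb b)).

Lemma Gb_agree b j s : s != m -> Gm j s.+1 = Gb b j s.+1.
Proof.
move=> hs; rewrite /Gm /Gb /upd; case: ifP => // _.
by rewrite /force /gb /= eqSS (negbTE hs).
Qed.

Lemma weight_mix (tr : seq slot) : weight Gm tr = \sum_b p b * weight (Gb b) tr.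
Proof.
have sp : \sum_b p b = 1 by have [_ ->] := hf i m.+1 hm.
case: (leqP (size tr) m) => hle.
  rewrite (eq_bigr (fun b => p b * weight Gm tr)); first by rewrite -mulr_suml sp mul1r.
  move=> b _; congr (_ * _); apply: weight_agree => j s /andP[hs0 hs].
  rewrite -(prednK hs0); symmetry; apply: Gb_agree.
  by rewrite neq_ltn -ltnS prednK // (leq_ltn_trans hs).
pose s0 : 'I_(size tr) := Ordinal hle.
pose Q (X : profile) := (\prod_(s < size tr | s != s0) \prod_j fac X tr s j) *
                         \prod_(j | j != i) fac X tr m j.
have wQ : forall X, weight X tr = fac X tr m i * Q X.
  move=> X; rewrite weightE (bigD1 s0) //= (bigD1 i) //= /Q.
  by rewrite mulrAC -mulrA mulrC -!mulrA; congr (_ * _); rewrite mulrC.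
have QE : forall b, Q (Gb b) = Q Gm.
  move=> b; rewrite /Q; congr (_ * _).
    apply: eq_bigr => s hs; apply: eq_bigr => j _; apply: fac_agree.
    by symmetry; apply: Gb_agree; exact: hs.
  by apply: eq_bigr => j /negbTE hj; rewrite /fac /Gb /Gm /upd hj.
rewrite wQ; under eq_bigr => b _ do rewrite wQ QE mulrA.
rewrite -mulr_suml.
have [Q0|Qn0] := eqVneq (Q Gm) 0; first by rewrite Q0 !mulr0.
congr (_ * _).
rewrite /fac /Gm /Gb /upd eqxx /force /= /m ltnn /=.
case: ifP => hpend; last by rewrite -mulr_suml sp mul1r.
have hph : phist (take m tr) i = hm.
  apply: (@eq_from_nth _ idl); first by rewrite size_map size_takel // ltnW.
  rewrite size_map size_takel ?(ltnW hle) // => r hr.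
  rewrite (nth_map p0) ?size_takel ?(ltnW hle) // nth_take //.
  have hr' : (r < size tr)%N := ltn_trans hr hle.
  apply: (@forced_fac f i hm (f i) tr r) => //; last first.
    by apply: pend_take_le hpend; apply: ltnW.
  move: Qn0; rewrite /Q mulf_eq0 negb_or => /andP[/prodf_neq0 H _].
  have hne : Ordinal hr' != s0 by rewrite -val_eqE /= neq_ltn hr.
  by have := H _ hne => /prodf_neq0; apply.
rewrite hph /gb eqxx.
under eq_bigr => b _ do rewrite ffunE.
rewrite (bigD1 (nth p0 tr m i)) //= eqxx mulr1 big1 ?addr0 // => b hb.
by rewrite eq_sym (negbTE hb) mulr0.
Qed.

Lemma gb_valid b : valid_protocol (gb b).
Proof. by move=> t hist; rewrite /gb; case: ifP => _; [apply: point_dist | apply: hf]. Qed.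

Lemma Gb_valid b : valid_profile (Gb b).
Proof. by apply: upd_valid => //; apply: force_valid; apply: gb_valid. Qed.

Lemma cost_mix : cost Gm i = (\sum_b ((p b)%:E * cost (Gb b) i))%E.
Proof.
rewrite /cost.
have e : forall s, (probm Gm s (fun tr => pendingb tr i))%:E =
   (\sum_b ((p b)%:E * (probm (Gb b) s (fun tr => pendingb tr i))%:E))%E.
  move=> s; rewrite sumEFin; congr EFin.
  rewrite /probm; under eq_bigr do rewrite weight_mix.
  rewrite exchange_big; apply: eq_bigr => b _; rewrite mulr_sumr.
  by apply: eq_bigr.
under eq_eseriesr do rewrite e.
rewrite nneseries_sum; last first.
  move=> b s _; apply: mule_ge0; rewrite lee_fin; first by have [-> _] := hf i m.+1 hm.
  by apply: probm_ge0; apply: Gb_valid.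
apply: eq_bigr => b _; rewrite nneseriesZl //.
by move=> s _; rewrite lee_fin; apply: probm_ge0; apply: Gb_valid.
Qed.

End Mix.


Lemma avg_eq (p : act -> R) (c : \bar R) (cb : act -> \bar R) a :
  (forall b, 0 <= p b) -> \sum_b p b = 1 -> 0 < p a -> (0 <= c)%E ->
  (forall b, c <= cb b)%E -> c = (\sum_b ((p b)%:E * cb b))%E -> cb a = c.
Proof.
move=> hp hs hpa hc0 hc hsum.
apply/eqP; rewrite eq_le hc andbT.
move: hc0 hc hsum; case: c => [r| |] hc0 hc hsum; last 2 first.
- by rewrite leey.
- by [].
have ge : ((p a)%:E * cb a + ((1 - p a) * r)%:E <= r%:E)%E.
  rewrite [in X in (_ <= X)%E]hsum (bigD1 a) //=; apply: leeD2l.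
  have -> : 1 - p a = \sum_(b | b != a) p b.
    by rewrite -hs (bigD1 a) //= addrC addrK.
  rewrite mulr_suml -sumEFin; apply: lee_sum => b _; rewrite EFinM.
  by apply: lee_wpmul2l; [rewrite lee_fin | exact: hc].
move: (hc a) ge; case: (cb a) => [y| |] hca ge.
- rewrite -EFinM -EFinD lee_fin in ge; rewrite lee_fin.
  have : p a * y <= p a * r by rewrite mulrBl mul1r in ge; lra.
  by rewrite ler_pM2l.
- by rewrite muleC gt0_mulye ?lte_fin // in ge.
- by [].
Qed.


Lemma upd_id (f : profile) i : upd f i (f i) = f.
Proof. by apply: funext => j; rewrite /upd; case: eqP => [->|]. Qed.

Lemma force_nil (g : protocol) : force [::] g = g.
Proof. by apply: funext => t; apply: funext => hist; rewrite /force; case: t. Qed.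

Lemma probm_nil (F : profile) i : probm F 0 (Hev i [::]) = 1.
Proof.
rewrite /probm (eq_bigl (fun tr => tr == [tuple])) => [|tr]; last first.
  by rewrite (tuple0 tr) eqxx /Hev.
by rewrite big_pred1_eq weightE; apply: big_ord0.
Qed.

Lemma condcost_nil (F : profile) i : condcost F i [::] = cost F i.
Proof.
rewrite /condcost /= probm_nil invr1 mule1 /cost.
apply: eq_eseriesr => s _; congr EFin; rewrite maxn0.
apply: eq_bigl => tr; rewrite take_oversize ?size_tuple // /Hev !take0 /=.
by rewrite andbT.
Qed.

Lemma cost_agree0 (f : profile) i (g g' : protocol) :
  (forall s, (0 < s)%N -> g s = g' s) -> cost (upd f i g) i = cost (upd f i g') i.
Proof.
move=> H; rewrite /cost; apply: eq_eseriesr => s _; congr EFin.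
apply: eq_bigr => tr _; apply: weight_agree => j s' /andP[hs _].
by rewrite /upd; case: ifP => // _; apply: H.
Qed.

Lemma mincost_le (f : profile) i (g : protocol) :
  valid_protocol g -> (mincost f i <= cost (upd f i g) i)%E.
Proof. by move=> hg; apply: ereal_inf_lbound; exists g. Qed.

Lemma mincost_eq (f : profile) i : valid_profile f ->
  (forall g, valid_protocol g -> (cost f i <= cost (upd f i g) i)%E) ->
  mincost f i = cost f i.
Proof.
move=> hf H; apply/eqP; rewrite eq_le; apply/andP; split.
  by rewrite -{2}(upd_id f i); apply: mincost_le.
by apply/ereal_infP => y [g hg <-]; apply: H.
Qed.

Lemma fac_take (F : profile) (tr : seq slot) m s j :
  (s < m)%N -> fac F (take m tr) s j = fac F tr s j.
Proof. by move=> hs; rewrite /fac (take_takel _ (ltnW hs)) (nth_take _ hs). Qed.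

Lemma weight_take_neq0 (F : profile) (tr : seq slot) m :
  weight F tr != 0 -> weight F (take m tr) != 0.
Proof.
move=> hw; rewrite weightE; apply/prodf_neq0 => s _; apply/prodf_neq0 => j _.
have : (nat_of_ord s < minn m (size tr))%N by rewrite -size_take_min; exact: ltn_ord.
rewrite leq_min => /andP[hs1 hs2].
by rewrite fac_take //; apply: weight_neq0.
Qed.

Lemma prefix_pos (f : profile) i h m : valid_profile f ->
  0 < probm f (size h) (Hev i h) -> (m < size h)%N ->
  0 < probm f m (Hev i (take m h)) /\ 0 < f i m.+1 (take m h) (nth idl h m).
Proof.
move=> hf hP hm.
have [tr [/andP[hp /eqP hh] hw]] := probm_gt0_ex hP.
rewrite take_oversize ?size_tuple // in hh.
have hst : size tr = size h by rewrite size_tuple.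
have hpm : pendingb (take m tr) i.
  by apply: pend_take_le hp; rewrite -ltnS prednK // (leq_ltn_trans _ hm).
split.
  apply: (@probm_gt0 _ _ _ (take m tr)) => //.
  - by rewrite size_takel // hst ltnW.
  - rewrite /Hev (size_takel (ltnW hm)) (take_takel _ (leq_pred m)) (take_takel _ (leqnn m)).
    rewrite (pend_take_le (leq_pred m) hpm) /=.
    by rewrite /phist map_take -/(phist tr i) hh eqxx.
  - by rewrite lt0r weight_take_neq0 //= weight_ge0.
have := weight_neq0 i hw (_ : (m < size tr)%N); rewrite hst => /(_ hm).
rewrite /fac hpm.
have -> : phist (take m tr) i = take m h by rewrite /phist map_take -/(phist tr i) hh.
have e : nth idl (phist tr i) m = nth p0 tr m i by rewrite (nth_map p0) // hst.
rewrite hh in e; rewrite -e.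
by move=> hne; rewrite lt0r hne; have [-> _] := hf i m.+1 (take m h).
Qed.

Lemma ex_consistent (f : profile) i : valid_profile f ->
  exists a, 0 < probm f 1 (Hev i [:: a]).
Proof.
move=> hf.
have hx : forall j, exists b, 0 < f j 1 [::] b.
  move=> j; case: (pickP (fun b => 0 < f j 1 [::] b)) => [b hb|H]; first by exists b.
  exfalso; have := (hf j 1 [::]).2; rewrite big1 => [/eqP|b _].
    by rewrite eq_sym oner_eq0.
  by have := (hf j 1 [::]).1 b; rewrite le0r (H b) orbF => /eqP.
pose x : slot := [ffun j => xchoose (hx j)].
exists (x i); apply: (@probm_gt0 _ _ _ [:: x]) => //.
  by rewrite /Hev /= eqxx.
rewrite weightE /= big_ord1; apply: prodr_gt0 => j _.
by rewrite /fac /= ffunE; apply: (xchooseP (hx j)).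
Qed.

Lemma pi_agree (g g' : protocol) h :
  (forall s, (s <= size h)%N -> g s = g' s) -> pi g h = pi g' h.
Proof. by move=> H; apply: eq_bigr => r _; rewrite H. Qed.

Lemma pos_forced (f : profile) i (g : protocol) h : valid_profile f ->
  valid_protocol g ->
  0 < probm (upd f i g) (size h) (Hev i h) ->
  pi g h != 0 /\ 0 < probm (upd f i (force h g)) (size h) (Hev i h).
Proof.
move=> hf hg hP.
have e : probm (upd f i g) (size h) (Hev i h) = pi g h * probm (upd f i (force h g)) (size h) (Hev i h).
  apply: probm_scale => tr hev; apply: weight_pi; first by rewrite size_tuple.
  by rewrite take_oversize // size_tuple.
rewrite e in hP; split.
  by apply/eqP => h0; rewrite h0 mul0r ltxx in hP.
rewrite lt0r; apply/andP; split.
  by apply/eqP => h0; rewrite h0 mulr0 ltxx in hP.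
by apply: probm_ge0; apply: upd_valid => //; apply: force_valid.
Qed.

Lemma force_step (f : profile) i h m : (m < size h)%N ->
  force (take m h) (gb f i (take m h) (nth idl h m)) = force (take m.+1 h) (f i).
Proof.
move=> hm; apply: funext => t; apply: funext => hist.
rewrite /force /gb !size_takel ?(ltnW hm) //.
case: t => [|t] //=.
case: (ltngtP t m) => ht.
- by rewrite ltnS (ltnW ht) (nth_take _ ht) (nth_take _ (leqW ht)).
- by rewrite eqSS gtn_eqF // ltnNge ht.
- by rewrite ht eqxx ltnSn nth_take.
Qed.

End Dev.

Unset Implicit Arguments.

Theorem lemma1 (R : realType) (n k : nat) (hk : (0 < k)%N)
  (f : profile R n k) (hf : valid_profile f) :
  equilibrium f <->
  (forall (i : 'I_n) (g : protocol R k), in_G f i g ->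
     cost (upd f i g) i = mincost f i /\ mincost f i = cost f i).
Proof.
split.
- move=> Heq i g [h [[h1 hP] ->]].
  have Hmin : mincost f i = cost f i.
    apply: mincost_eq => // g' hg'.
    pose g'' : protocol R k := fun s => if s == 0%N then f i 0%N else g' s.
    have -> : cost (upd f i g') i = cost (upd f i g'') i.
      by apply: cost_agree0 => -[|s].
    rewrite -!condcost_nil; apply: (Heq i 0%N [::]) => //.
    - by rewrite probm_nil ltr01.
    - by move=> [|s] hist; rewrite /g'' /=; [apply: hf | apply: hg'].
    - by case.
  split; last exact: Hmin.
  rewrite Hmin gdevE.
  have ind : forall m, (m <= size h)%N -> cost (upd f i (force (take m h) (f i))) i = cost f i.
    elim=> [|m IH] hm; first by rewrite take0 force_nil upd_id.
    have hlt : (m < size h)%N := hm.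
    have [hPm hpa] := prefix_pos hf hP hlt.
    have hsz : size (take m h) = m by rewrite size_takel // ltnW.
    rewrite -(@force_step _ _ _ f i h m hlt) -(IH (ltnW hlt)).
    set hm' := take m h.
    have hv : forall b, valid_protocol (gb f i hm' b) by move=> b; apply: gb_valid.
    have hag : forall b s, (s <= size hm')%N -> f i s = gb f i hm' b s.
      move=> b s hs; apply: funext => hist; rewrite /gb.
      by have -> : (s == (size hm').+1) = false by apply/negbTE; rewrite neq_ltn ltnS hs.
    have [hpi hPG] : pi (f i) hm' != 0 /\ 0 < probm (upd f i (force hm' (f i))) (size hm') (Hev i hm').
      by apply: pos_forced => //; rewrite upd_id hsz.
    apply: (@avg_eq _ _ (f i (size hm').+1 hm') _ (fun b => cost (upd f i (force hm' (gb f i hm' b))) i) (nth (idle k) h m)).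
    - by move=> b; have [-> _] := hf i (size hm').+1 hm'.
    - by have [_ ->] := hf i (size hm').+1 hm'.
    - by rewrite hsz.
    - by apply: nneseries_ge0 => s _ _; rewrite lee_fin; apply: probm_ge0; apply: upd_valid => //; apply: force_valid.
    - move=> b; rewrite (@cost_condcost_le _ _ _ _ _ hm' (f i) (gb f i hm' b)) //.
      + rewrite -condcost_pi // -condcost_pi //; last by rewrite -(pi_agree (hag b)).
        rewrite upd_id; apply: (Heq i m hm'); [exact: hsz | exact: hPm | exact: hv | ].
        by move=> s hs; symmetry; apply: hag; rewrite hsz.
      + by apply: hag.
    - exact: cost_mix.
  by have := ind (size h) (leqnn _); rewrite take_size.
- move=> H2 i t h hsz hP g hg hag.
  have Hmin : mincost f i = cost f i.
    have [a ha] := ex_consistent i hf.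
    have [_ ->] := H2 i (gdev f i [:: a]) (ex_intro _ [:: a] (conj (conj isT ha) erefl)).
    by [].
  case: t hsz hP hag => [|t] hsz hP hag.
    move/size0nil: hsz => ->; rewrite !condcost_nil -Hmin; exact: mincost_le.
  have hc : consistent f i h by split; rewrite ?hsz // -hsz.
  have [e1 _] := H2 i (gdev f i h) (ex_intro _ h (conj hc erefl)).
  have [hpi hPG] : pi (f i) h != 0 /\ 0 < probm (upd f i (force h (f i))) (size h) (Hev i h).
    by apply: pos_forced => //; rewrite upd_id hsz.
  have hag' : forall s, (s <= size h)%N -> f i s = g s by move=> s hs; symmetry; apply: hag; rewrite -hsz.
  have hpi' : pi g h != 0 by rewrite -(pi_agree hag').
  rewrite -{1}(upd_id f i) (@condcost_pi _ _ _ f i (f i) h hf (hf i) hpi).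
  rewrite (@condcost_pi _ _ _ f i g h hf hg hpi').
  rewrite -(@cost_condcost_le _ _ _ f i h (f i) g hf (hf i) hg hag' hPG).
  by rewrite -gdevE e1; apply: mincost_le; apply: force_valid.
Qed.
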